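(* Let $\overline T$ be a subspace of $\overline K^\circ$ and $\tilde q:\widetilde V\to\overline K/\overline T$ a non-trivial generalized $(\sigma,\varepsilon)$-quadratic form with sesquilinearization $\tilde f$, whose singular points span $\mathrm{PG}(\widetilde V)$. Let $U\subseteq\mathrm{Rad}(\tilde f)$ be a subspace with $U\cap\mathrm{Rad}(\tilde q)=\{0\}$, let $q:=\tilde q_U:V:=\widetilde V/U\to\overline K/\overline R$ (with $\overline R:=\overline T_U$) be the quotient form, assumed non-trivial, and let $\overline S$ be any complement of $\overline T$ in the $K$-vector space $\overline R$. Then $\tilde q$ is isomorphic to the cover $q_E^{\overline S,\overline T}$ (for any basis $E$ of $V$ of $q$-singular vectors), i.e. there is a bijective linear map $\alpha:\widetilde V\to V\oplus\overline S$ with $q_E^{\overline S,\overline T}(\alpha(v))=\tilde q(v)$ for all $v\in\widetilde V$.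
   Context: $K$ division ring, $(\sigma,\varepsilon)$ admissible pair ($\sigma$ anti-automorphism, $\varepsilon^\sigma\varepsilon=1$, $t^{\sigma^2}=\varepsilon t\varepsilon^{-1}$). $K_{\sigma,\varepsilon}=\{t-t^\sigma\varepsilon\}$, $K^{\sigma,\varepsilon}=\{t:t=-t^\sigma\varepsilon\}$, $\overline K=K/K_{\sigma,\varepsilon}$, $\bar t$ class of $t$, $\bar t\circ\lambda=\overline{\lambda^\sigma t\lambda}$, $\overline K^\circ=K^{\sigma,\varepsilon}/K_{\sigma,\varepsilon}$ (right $K$-vector space under $\circ$). A generalized $(\sigma,\varepsilon)$-quadratic form with co-defect a $\circ$-stable subgroup $\overline H$: $p:W\to\overline K/\overline H$ ($W$ right $K$-vector space) with $p(w\lambda)=p(w)\circ\lambda$ ($(\bar t+\overline H)\circ\lambda=\bar t\circ\lambda+\overline H$) and trace-valued $(\sigma,\varepsilon)$-sesquilinear $h$ ($h(x\lambda,y\mu)=\lambda^\sigma h(x,y)\mu$, $h(y,x)=h(x,y)^\sigma\varepsilon$, $h(x,x)\in\{t+t^\sigma\varepsilon\}$) with $p(x+y)=p(x)+p(y)+(\overline{h(x,y)}+\overline H)$. Non-trivial: not identically $\overline H$; singular vector: $p(w)=\overline H$. $\mathrm{Rad}(h)=\{x:h(x,W)=0\}$, $\mathrm{Rad}(p)$ its singular vectors. Quotient: $\overline H_U\supseteq\overline H$ is the subspace of $\overline K^\circ$ with $\overline H_U/\overline H=p(U)$ and $p_U(w+U)=\bar t+\overline H_U$ where $\bar t+\overline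 H=p(w)$. Cover: for $q:V\to\overline K/\overline R$ with sesquilinearization $f$, a basis $E=(e_i)_{i\in I}$ of $q$-singular vectors ($I$ totally ordered), $g_E(\sum e_i\lambda_i,\sum e_j\mu_j)=\sum_{i<j}\lambda_i^\sigma f(e_i,e_j)\mu_j$, and $\overline R=\overline S\oplus\overline T$, the form $q_E^{\overline S,\overline T}:V\oplus\overline S\to\overline K/\overline T$ is $q_E^{\overline S,\overline T}(x+\bar r)=\overline{g_E(x,x)}+\bar r+\overline T$. *)

(* Defs.v *)
From HB Require Import structures.
From mathcomp Require Import all_boot all_order all_algebra.
Set Implicit Arguments. Unset Strict Implicit. Unset Printing Implicit Defensive.
Import Order.TTheory GRing.Theory.
Local Open Scope ring_scope.

Definition division_ring (K : unitRingType) : Prop :=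
  forall x : K, x != 0 -> x \is a GRing.unit.

(* Right K-vector spaces are modelled as left modules over the converse ring
   K^c : [rsc v l] is the right scalar multiple  v * l. *)
Definition rsc (K : pzRingType) (V : lmodType K^c) (v : V) (l : K) : V :=
  (l : K^c) *: v.

Definition rlinear (K : pzRingType) (V W : lmodType K^c) (g : V -> W) : Prop :=
  (forall x y, g (x + y) = g x + g y) /\ (forall x l, g (rsc x l) = rsc (g x) l).

Definition admissible (K : unitRingType) (sigma : K -> K) (eps : K) : Prop :=
  [/\ bijective sigma,
      (forall x y, sigma (x + y) = sigma x + sigma y),
      (forall x y, sigma (x * y) = sigma y * sigma x),
      sigma 1 = 1 &
      sigma eps * eps = 1] /\
  (forall t, sigma (sigma t) = eps * t * eps^-1).

(* Subsets of K are Prop predicates; a subgroup \bar H of \bar K = K/K_{s,e}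
   is represented by its preimage H in K (a subgroup containing K_{s,e}). *)
Definition Kse (K : unitRingType) (sigma : K -> K) (eps : K) (x : K) : Prop :=
  exists t, x = t - sigma t * eps.

Definition Kfix (K : unitRingType) (sigma : K -> K) (eps : K) (x : K) : Prop :=
  x = - (sigma x * eps).

Definition circ (K : unitRingType) (sigma : K -> K) (t l : K) : K :=
  sigma l * t * l.

(* H (preimage in K of) a K-subspace \bar H of \bar K^circ = K^{s,e}/K_{s,e}. *)
Definition Kcirc_subspace (K : unitRingType) (sigma : K -> K) (eps : K)
    (H : K -> Prop) : Prop :=
  [/\ (forall x, Kse sigma eps x -> H x),
      (forall x, H x -> Kfix sigma eps x),
      (forall x y, H x -> H y -> H (x - y)) &
      (forall t l, H t -> H (circ sigma t l))].

(* Generalized (sigma,eps)-quadratic form with co-defect \bar H, where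
   p : W -> K is a representative-valued version of p : W -> \bar K/\bar H
   (values are only relevant modulo H), with sesquilinearization h. *)
Definition trace_valued_sesq (K : unitRingType) (sigma : K -> K) (eps : K)
    (W : lmodType K^c) (h : W -> W -> K) : Prop :=
  [/\ (forall x y z, h (x + y) z = h x z + h y z),
      (forall x y z, h x (y + z) = h x y + h x z),
      (forall x y l m, h (rsc x l) (rsc y m) = sigma l * h x y * m),
      (forall x y, h y x = sigma (h x y) * eps) &
      (forall x, exists t, h x x = t + sigma t * eps)].

Definition is_gqf (K : unitRingType) (sigma : K -> K) (eps : K)
    (H : K -> Prop) (W : lmodType K^c) (p : W -> K) (h : W -> W -> K) : Prop :=
  [/\ trace_valued_sesq sigma eps h,
      (forall w l, H (p (rsc w l) - circ sigma (p w) l)) &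
      (forall x y, H (p (x + y) - (p x + p y + h x y)))].

Definition singular (K : unitRingType) (H : K -> Prop) (W : lmodType K^c)
    (p : W -> K) (w : W) : Prop := H (p w).

Definition nontrivial (K : unitRingType) (H : K -> Prop) (W : lmodType K^c)
    (p : W -> K) : Prop := exists w, ~ H (p w).

Definition radf (K : unitRingType) (W : lmodType K^c) (h : W -> W -> K)
    (x : W) : Prop := forall y, h x y = 0.

Definition radq (K : unitRingType) (H : K -> Prop) (W : lmodType K^c)
    (p : W -> K) (h : W -> W -> K) (x : W) : Prop := radf h x /\ singular H p x.

Definition singular_span (K : unitRingType) (H : K -> Prop) (W : lmodType K^c)
    (p : W -> K) : Prop :=
  forall v : W, exists s : seq (W * K),
    (forall c, c \in s -> singular H p c.1) /\
    v = \sum_(c <- s) rsc c.1 c.2.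

(* \bar T_U : the subspace with \bar T_U / \bar T = p(U) (preimage in K). *)
Definition quot_codefect (K : unitRingType) (T : K -> Prop) (W : lmodType K^c)
    (p : W -> K) (U : W -> Prop) (x : K) : Prop :=
  exists u t, U u /\ T t /\ x = p u + t.

Definition is_basis (K : unitRingType) (V : lmodType K^c) (I : eqType)
    (e : I -> V) : Prop :=
  (forall v, exists (s : seq I) (lam : I -> K), v = \sum_(i <- s) rsc (e i) (lam i)) /\
  (forall (s : seq I) (lam : I -> K), uniq s ->
     \sum_(i <- s) rsc (e i) (lam i) = 0 -> forall i, i \in s -> lam i = 0).

(* [gE_val sigma e f x y] : y = g_E(x, x), where
   g_E(sum e_i l_i, sum e_j m_j) = sum_{i<j} l_i^sigma f(e_i,e_j) m_j. *)
Definition gE_val (K : unitRingType) (sigma : K -> K) (V : lmodType K^c)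
    (d : Order.disp_t) (I : orderType d) (e : I -> V) (f : V -> V -> K)
    (x : V) (y : K) : Prop :=
  exists (s : seq I) (lam : I -> K),
    [/\ uniq s,
        x = \sum_(i <- s) rsc (e i) (lam i) &
        y = \sum_(i <- s) \sum_(j <- s | (i < j)%O)
              sigma (lam i) * f (e i) (e j) * lam j].

(* Isomorphism W -> V (+) \bar S onto the cover q_E^{S,T}, with
   alpha = (a1, a2), a2 taking values in (the preimage S of) \bar S and being
   K-linear modulo K_{s,e} for the circ-structure. *)
Definition cover_iso (K : unitRingType) (sigma : K -> K) (eps : K)
    (S T : K -> Prop) (W V : lmodType K^c) (qt : W -> K)
    (d : Order.disp_t) (I : orderType d) (e : I -> V) (f : V -> V -> K)
    (a1 : W -> V) (a2 : W -> K) : Prop :=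
  [/\ rlinear a1,
      (forall v, S (a2 v)),
      (forall v w, Kse sigma eps (a2 (v + w) - (a2 v + a2 w))) &
      (forall v l, Kse sigma eps (a2 (rsc v l) - circ sigma (a2 v) l))] /\
  [/\
      (forall v, a1 v = 0 -> Kse sigma eps (a2 v) -> v = 0),
      (forall x s, S s -> exists v, a1 v = x /\ Kse sigma eps (a2 v - s)) &
      (* q_E^{S,T}(alpha v) = qt v *)
      (forall v y, gE_val sigma e f (a1 v) y -> T (y + a2 v - qt v))].

(* \bar S is a complement of \bar T in \bar R (all given by preimages in K,
   each containing K_{s,e}). *)
Definition complement_in (K : unitRingType) (sigma : K -> K) (eps : K)
    (S T R : K -> Prop) : Prop :=
  [/\ (forall x, S x -> R x),
      (forall r, R r -> exists s t, S s /\ T t /\ r = s + t) &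
      (forall x, S x -> T x -> Kse sigma eps x)].

(* Main.v *)
Require Import Defs.
From HB Require Import structures.
From mathcomp Require Import all_boot all_order all_algebra.
From Stdlib Require Import ClassicalEpsilon.
Set Implicit Arguments. Unset Strict Implicit. Unset Printing Implicit Defensive.
Import Order.TTheory GRing.Theory.
Local Open Scope ring_scope.

Definition subgrp (G : zmodType) (P : G -> Prop) :=
  P 0 /\ (forall x y, P x -> P y -> P (x - y)).

Lemma subgrpN (G : zmodType) (P : G -> Prop) : subgrp P -> forall x, P x -> P (- x).
Proof. move=> [P0 PB] x Px. by rewrite -sub0r; apply: PB. Qed.

Lemma subgrpD (G : zmodType) (P : G -> Prop) : subgrp P -> forall x y, P x -> P y -> P (x + y).
Proof. move=> hP x y Px Py. rewrite -(opprK y). apply: hP.2 => //. exact: subgrpN. Qed.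

Lemma subgrp_sum (G : zmodType) (P : G -> Prop) (I : eqType) (r : seq I) (F : I -> G) :
  subgrp P -> (forall i, i \in r -> P (F i)) -> P (\sum_(i <- r) F i).
Proof.
move=> hP hF. elim: r hF => [|a r IH] hF; first by rewrite big_nil; exact: hP.1.
rewrite big_cons; apply: subgrpD => //; first by apply: hF; rewrite inE eqxx.
by apply: IH => i ir; apply: hF; rewrite inE ir orbT.
Qed.

Definition eqm (G : zmodType) (P : G -> Prop) (a b : G) := P (a - b).

Lemma eqm_refl (G : zmodType) (P : G -> Prop) a : subgrp P -> eqm P a a.
Proof. by move=> hP; rewrite /eqm subrr; exact: hP.1. Qed.

Lemma eqm_sym (G : zmodType) (P : G -> Prop) a b : subgrp P -> eqm P a b -> eqm P b a.
Proof. move=> hP h; rewrite /eqm -opprB; exact: subgrpN. Qed.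

Lemma eqm_trans (G : zmodType) (P : G -> Prop) a b c : subgrp P -> eqm P a b -> eqm P b c -> eqm P a c.
Proof. move=> hP h1 h2; rewrite /eqm -(subrKA b); exact: subgrpD. Qed.

Lemma eqm_add (G : zmodType) (P : G -> Prop) a b c d : subgrp P -> eqm P a b -> eqm P c d -> eqm P (a + c) (b + d).
Proof. move=> hP h1 h2; rewrite /eqm opprD addrACA; exact: subgrpD. Qed.

Lemma eqm_opp (G : zmodType) (P : G -> Prop) a b : subgrp P -> eqm P a b -> eqm P (- a) (- b).
Proof. move=> hP h1; rewrite /eqm -opprD; exact: subgrpN. Qed.

Lemma eqm0 (G : zmodType) (P : G -> Prop) a : eqm P a 0 <-> P a.
Proof. by rewrite /eqm subr0. Qed.

Lemma eqm_sub (G : zmodType) (P : G -> Prop) a b c d : subgrp P -> eqm P a b -> eqm P c d -> eqm P (a - c) (b - d).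
Proof. move=> hP h1 h2; apply: eqm_add => //; exact: eqm_opp. Qed.

Lemma eqm_sum (G : zmodType) (P : G -> Prop) (I : eqType) (r : seq I) (F F' : I -> G) :
  subgrp P -> (forall i, i \in r -> eqm P (F i) (F' i)) -> eqm P (\sum_(i <- r) F i) (\sum_(i <- r) F' i).
Proof. move=> hP h; rewrite /eqm -sumrB; exact: subgrp_sum. Qed.

Lemma eqm_sub_incl (G : zmodType) (P Q : G -> Prop) a b : (forall x, P x -> Q x) -> eqm P a b -> eqm Q a b.
Proof. by move=> h; apply: h. Qed.

Lemma sum_pred1_uniq (G : zmodType) (I : eqType) (u : seq I) (x : I) (c : G) :
  uniq u -> x \in u -> \sum_(i <- u | x == i) c = c.
Proof.
move=> uu xu. rewrite (perm_big _ (perm_to_rem xu)) big_cons eqxx.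
rewrite big1_seq; first by apply: addr0.
move=> i /andP[/eqP <-]. by rewrite mem_rem_uniqF.
Qed.

Lemma regroup (K : pzRingType) (M : lmodType K^c) (I : eqType) (g : I -> M) (r : seq (I * K)) :
  \sum_(c <- r) rsc (g c.1) c.2 =
  \sum_(i <- undup (map fst r)) rsc (g i) (\sum_(c <- r | c.1 == i) c.2).
Proof.
rewrite /rsc.
under [RHS]eq_bigr => i _ do rewrite scaler_suml.
transitivity (\sum_(i <- undup (map fst r)) \sum_(c <- r | c.1 == i) ((c.2 : K^c) *: g c.1)).
  2: by apply: eq_bigr => i _; apply: eq_bigr => c /eqP ->.
under [RHS]eq_bigr => i _ do rewrite big_mkcond.
rewrite exchange_big /= [LHS]big_seq [RHS]big_seq. apply: eq_bigr => c cr.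
rewrite -big_mkcond /= sum_pred1_uniq ?undup_uniq //.
by rewrite mem_undup; apply: map_f.
Qed.

Lemma rsc_comp (K : pzRingType) (V : lmodType K^c) (v : V) a b :
  rsc (rsc v a) b = rsc v (a * b).
Proof. by rewrite /rsc scalerA. Qed.

Lemma rsc_sumr (K : pzRingType) (V : lmodType K^c) (I : Type) (r : seq I) (F : I -> V) b :
  rsc (\sum_(i <- r) F i) b = \sum_(i <- r) rsc (F i) b.
Proof. by rewrite /rsc scaler_sumr. Qed.

Lemma indep_transfer (K : pzRingType) (V M : lmodType K^c) (I : eqType) (e : I -> V) (g : I -> M)
  (hind : forall (s : seq I) (lam : I -> K), uniq s ->
     \sum_(i <- s) rsc (e i) (lam i) = 0 -> forall i, i \in s -> lam i = 0)
  (r : seq (I * K)) :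
  \sum_(c <- r) rsc (e c.1) c.2 = 0 -> \sum_(c <- r) rsc (g c.1) c.2 = 0.
Proof.
rewrite regroup => h. have := hind _ _ (undup_uniq _) h => h2.
rewrite regroup big_seq big1 // => i iu. by rewrite h2 // /rsc scale0r.
Qed.

Lemma transfer2 (K : pzRingType) (V M : lmodType K^c) (I : eqType) (e : I -> V) (g : I -> M)
  (hind : forall (s : seq I) (lam : I -> K), uniq s ->
     \sum_(i <- s) rsc (e i) (lam i) = 0 -> forall i, i \in s -> lam i = 0)
  (r1 r2 : seq (I * K)) :
  \sum_(c <- r1) rsc (e c.1) c.2 = \sum_(c <- r2) rsc (e c.1) c.2 ->
  \sum_(c <- r1) rsc (g c.1) c.2 = \sum_(c <- r2) rsc (g c.1) c.2.
Proof.
set neg := fun c : I * K => (c.1, - c.2).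
have hN : forall (N : lmodType K^c) (h : I -> N),
  \sum_(c <- r1 ++ map neg r2) rsc (h c.1) c.2 =
  \sum_(c <- r1) rsc (h c.1) c.2 - \sum_(c <- r2) rsc (h c.1) c.2.
  move=> N h; rewrite big_cat big_map /= -sumrN; congr (_ + _).
  by apply: eq_bigr => c _; rewrite /rsc scaleNr.
move=> /eqP; rewrite -subr_eq0 -hN => /eqP /(indep_transfer g hind).
by rewrite hN => /eqP; rewrite subr_eq0 => /eqP.
Qed.

Lemma sigma0 (K : unitRingType) (sigma : K -> K) (eps : K) :
  admissible sigma eps -> sigma 0 = 0.
Proof.
move=> [[_ sD _ _ _] _]. have h := sD 0 0. rewrite addr0 in h.
by apply: (addrI (sigma 0)); rewrite addr0 -h.
Qed.

Lemma sigmaN (K : unitRingType) (sigma : K -> K) (eps : K) :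
  admissible sigma eps -> forall x, sigma (- x) = - sigma x.
Proof.
move=> hA x. have := hA.1; case=> _ sD _ _ _. apply/eqP; rewrite -addr_eq0 -sD addNr.
by rewrite (sigma0 hA).
Qed.

Lemma sigmaB (K : unitRingType) (sigma : K -> K) (eps : K) :
  admissible sigma eps -> forall x y, sigma (x - y) = sigma x - sigma y.
Proof. move=> hA x y. have := hA.1; case=> _ sD _ _ _. by rewrite sD (sigmaN hA). Qed.

Lemma Kse_grp (K : unitRingType) (sigma : K -> K) (eps : K) :
  admissible sigma eps -> subgrp (Kse sigma eps).
Proof.
move=> hA; split; first by exists 0; rewrite (sigma0 hA) mul0r subr0.
move=> x y [t ->] [t' ->]; exists (t - t'). rewrite (sigmaB hA) mulrBl.
by rewrite opprD addrACA -opprD.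
Qed.

Lemma Kcirc_grp (K : unitRingType) (sigma : K -> K) (eps : K) (H : K -> Prop) :
  admissible sigma eps -> Kcirc_subspace sigma eps H -> subgrp H.
Proof.
move=> hA [h1 _ h3 _]; split=> //. apply: h1. exact: (Kse_grp hA).1.
Qed.

Lemma Kse_swap (K : unitRingType) (sigma : K -> K) (eps : K) b :
  admissible sigma eps -> Kse sigma eps (sigma b * eps - b).
Proof. move=> hA; exists (- b). by rewrite (sigmaN hA) mulNr opprK addrC. Qed.

Lemma Fswap (K : unitRingType) (sigma : K -> K) (eps : K) :
  admissible sigma eps -> eps \is a GRing.unit ->
  forall A x y, sigma x * (sigma A * eps) * y = sigma (sigma y * A * x) * eps.
Proof.
move=> [[_ _ sM _ _] ss] eU A x y.
rewrite !sM ss !mulrA. by rewrite divrK.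
Qed.

Lemma ft_sumr (K : unitRingType) (sigma : K -> K) (eps : K) (W : lmodType K^c) (h : W -> W -> K) :
  trace_valued_sesq sigma eps h -> forall x (I : Type) (r : seq I) (F : I -> W),
  h x (\sum_(i <- r) F i) = \sum_(i <- r) h x (F i).
Proof.
move=> [_ h2 _ _ _] x I r F.
have h0 : h x 0 = 0.
  have := h2 x 0 0; rewrite addr0 => e. by apply: (addrI (h x 0)); rewrite addr0 -e.
by apply: (big_morph (h x)).
Qed.

Lemma K1 (K : unitRingType) (sigma : K -> K) (eps : K) (hA : admissible sigma eps)
  (eU : eps \is a GRing.unit)
  (T : K -> Prop) (hT : Kcirc_subspace sigma eps T)
  (W : lmodType K^c) (qt : W -> K) (ft : W -> W -> K)
  (hq : is_gqf sigma eps T qt ft)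
  (d : Order.disp_t) (I : orderType d) (et : I -> W)
  (hsing : forall i, T (qt (et i))) (lam : I -> K) (s : seq I) :
  uniq s ->
  eqm T (qt (\sum_(i <- s) rsc (et i) (lam i)))
        (\sum_(i <- s) \sum_(j <- s | (i < j)%O) sigma (lam i) * ft (et i) (et j) * lam j).
Proof.
have gT := Kcirc_grp hA hT.
case: hT => TKse _ _ Tcirc.
case: hq => hf qsc qadd.
set F := fun i j => sigma (lam i) * ft (et i) (et j) * lam j.
have s0 := sigma0 hA.
have qt0 : T (qt 0).
  have := qsc 0 0. rewrite /rsc scaler0 /circ mulr0 subr0. done.
under [X in eqm _ _ X]eq_bigr => i _ do rewrite big_mkcond /=.
elim: s => [|a s IH] /=; first by rewrite !big_nil /eqm subr0.
move=> /andP[nas us]. rewrite !big_cons /= ltxx add0r.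
under [X in eqm _ _ (_ + X)]eq_bigr => i _ do rewrite big_cons /=.
rewrite big_split /= addrA.
set x := rsc (et a) (lam a). set w := \sum_(i <- s) _.
apply: (eqm_trans gT (qadd x w)).
rewrite [X in eqm _ X _]addrAC.
apply: eqm_add => //; last exact: (IH us).
rewrite -[X in eqm _ _ X]add0r.
apply: eqm_add => //.
  rewrite /eqm subr0. have := qsc (et a) (lam a) => h.
  rewrite -(subrK (circ sigma (qt (et a)) (lam a)) (qt x)).
  apply: subgrpD => //. exact: Tcirc.
rewrite /w (ft_sumr hf) -big_split /=.
apply: eqm_sum => // j js.
case: hf => _ _ fsc fsym _.
rewrite /x fsc.
have ja : j != a by apply: contraNneq nas => <-.
case: (ltgtP a j) => [aj|ja'|e]; last by rewrite e eqxx in ja.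
  rewrite addr0; exact: eqm_refl.
rewrite add0r.
rewrite fsym (Fswap hA eU). apply: TKse. exact: Kse_swap.
Qed.

Lemma subsub_helper (G : zmodType) (r s s' : G) : (r - s') - (r - s) = s - s'.
Proof. by rewrite opprB addrC addrA subrK. Qed.

Theorem mainTheorem18
  (K : unitRingType) (hK : division_ring K)
  (sigma : K -> K) (eps : K) (hadm : admissible sigma eps)
  (T : K -> Prop) (hT : Kcirc_subspace sigma eps T)
  (Wt : lmodType K^c) (qt : Wt -> K) (ft : Wt -> Wt -> K)
  (hqt : is_gqf sigma eps T qt ft)
  (hqt_nt : nontrivial T qt)
  (hspan : singular_span T qt)
  (U : Wt -> Prop)
  (hU_rad : forall u, U u -> radf ft u)
  (hU_cap : forall u, U u -> radq T qt ft u -> u = 0)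
  (V : lmodType K^c) (pi : Wt -> V)
  (hpi_lin : rlinear pi)
  (hpi_surj : forall v, exists w, pi w = v)
  (hpi_ker : forall w, pi w = 0 <-> U w)
  (q : V -> K)
  (hq_def : forall w, quot_codefect T qt U (q (pi w) - qt w))
  (f : V -> V -> K)
  (hf_def : forall x y, f (pi x) (pi y) = ft x y)
  (hq_nt : nontrivial (quot_codefect T qt U) q)
  (S : K -> Prop) (hS : Kcirc_subspace sigma eps S)
  (hSc : complement_in sigma eps S T (quot_codefect T qt U))
  (d : Order.disp_t) (I : orderType d) (e : I -> V)
  (he_basis : is_basis e)
  (he_sing : forall i, singular (quot_codefect T qt U) q (e i)) :
  exists (a1 : Wt -> V) (a2 : Wt -> K),
    cover_iso sigma eps S T qt e f a1 a2.
Proof.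
have [[sbij sD sM s1 sE] ss] := hadm.
have gT := Kcirc_grp hadm hT.
have gS := Kcirc_grp hadm hS.
have gKse := Kse_grp hadm.
have [TKse Tfix _ Tcirc] := hT.
have [SKse _ _ Scirc] := hS.
have [hf qsc qadd] := hqt.
have [fD1 fD2 fsc fsym ftr] := hf.
have [piD piZ] := hpi_lin.
have [SR Rdec SnT] := hSc.
have [bspan bind] := he_basis.
have s0 := sigma0 hadm.
have eps0 : eps != 0.
  apply/eqP => e0; move: sE; rewrite e0 mulr0 => /eqP; by rewrite eq_sym oner_eq0.
have eU := hK eps eps0.
have qt0 : T (qt 0).
  have := qsc 0 0. by rewrite /rsc scaler0 /circ mulr0 subr0.
have pi0 : pi 0 = 0.
  have := piD 0 0; rewrite addr0 => h. by apply: (addrI (pi 0)); rewrite addr0 -h.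
have piN : forall w, pi (- w) = - pi w.
  move=> w; apply/eqP; rewrite -addr_eq0 -piD addNr pi0; exact/eqP.
have piB : forall w w', pi (w - w') = pi w - pi w'.
  by move=> w w'; rewrite piD piN.
have pisum : forall (J : Type) (r : seq J) (F : J -> Wt), pi (\sum_(j <- r) F j) = \sum_(j <- r) pi (F j).
  by move=> J r F; apply: (big_morph pi piD pi0).
have UN : forall u, U u -> U (- u).
  by move=> u /hpi_ker hu; apply/hpi_ker; rewrite piN hu oppr0.
have UB : forall u u', U u -> U u' -> U (u - u').
  by move=> u u' /hpi_ker hu /hpi_ker hu'; apply/hpi_ker; rewrite piB hu hu' subr0.
have radr : forall u y, U u -> ft y u = 0.
  by move=> u y hu; rewrite fsym (hU_rad u hu) s0 mul0r.
have sN1 : sigma (-1) = -1 by rewrite (sigmaN hadm) s1.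
have qtN : forall w, eqm T (qt (- w)) (qt w).
  move=> w. have := qsc w (-1).
  have -> : rsc w (-1) = - w by rewrite /rsc scaleN1r.
  by rewrite /circ sN1 mulN1r mulrN1 opprK.
have qU2 : forall u, U u -> T (qt u + qt u).
  move=> u hu. apply/(eqm0 T). 
  have h1 : eqm T (qt u + qt (- u)) 0.
    apply: eqm_sym => //. apply: (eqm_trans gT (b := qt (u + - u))).
      by rewrite addrN /eqm sub0r; apply: subgrpN.
    have := qadd u (- u). rewrite (hU_rad u hu) addr0. done.
  apply: eqm_trans h1 => //. apply: eqm_add => //; first exact: eqm_refl.
  exact: eqm_sym.
have qt_addU : forall w u, U u -> eqm T (qt (w + u)) (qt w + qt u).
  move=> w u hu. have := qadd w u. by rewrite radr // addr0.
set R := quot_codefect T qt U.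
have RB : forall x y, R x -> R y -> R (x - y).
  move=> x y [u1 [t1 [hu1 [ht1 ->]]]] [u2 [t2 [hu2 [ht2 ->]]]].
  exists (u1 - u2), ((qt u1 + t1) - (qt u2 + t2) - qt (u1 - u2)).
  split; first exact: UB. split; last by rewrite [RHS]addrC subrK.
  apply: eqm_sym => //.
  apply: (eqm_trans gT (qt_addU _ _ (UN _ hu2))).
  apply: (eqm_trans gT (b := qt u1 - qt u2)).
    apply: eqm_add => //; first exact: eqm_refl.
    apply: (eqm_trans gT (qtN _)). by rewrite /eqm opprK; apply: qU2.
  apply: eqm_sub => //; rewrite -[X in eqm _ X _]addr0; apply: eqm_add => //;
    try exact: eqm_refl; apply: eqm_sym => //; exact/(eqm0 T).
have lift : forall i, exists w, pi w = e i /\ T (qt w).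
  move=> i. have [w0 hw0] := hpi_surj (e i).
  have hR : R (qt w0).
    have := RB _ _ (he_sing i) (hq_def w0). by rewrite hw0 opprB addrC subrK.
  have [u [t [hu [ht def]]]] := hR.
  exists (w0 + - u); split; first by rewrite piD piN (proj2 (hpi_ker u) hu) oppr0 addr0.
  apply/(eqm0 T). apply: (eqm_trans gT (qt_addU _ _ (UN _ hu))).
  rewrite def.
  have h1 : eqm T (qt u + t + qt (- u)) ((qt u + qt u) + t).
    rewrite [X in eqm _ X _]addrAC. apply: eqm_add => //; last exact: eqm_refl.
    apply: eqm_add => //; try exact: eqm_refl; try exact: qtN.
  apply: (eqm_trans gT h1).
  rewrite -[X in eqm _ _ X]addr0. apply: eqm_add => //; apply/(eqm0 T) => //; exact: qU2.
pose et := fun i => epsilon (inhabits 0) (fun w => pi w = e i /\ T (qt w)).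
have etP : forall i, pi (et i) = e i /\ T (qt (et i)).
  move=> i; exact: (epsilon_spec (inhabits 0) _ (lift i)).
pose rep := fun x : V => epsilon (inhabits [::])
  (fun r : seq (I * K) => x = \sum_(c <- r) rsc (e c.1) c.2).
have repP : forall x, x = \sum_(c <- rep x) rsc (e c.1) c.2.
  move=> x; apply: (epsilon_spec (inhabits [::]) (fun r : seq (I * K) => x = \sum_(c <- r) rsc (e c.1) c.2)).
  have [s [lam ->]] := bspan x. exists (map (fun i => (i, lam i)) s). by rewrite big_map.
pose Lf := fun x => \sum_(c <- rep x) rsc (et c.1) c.2.
have LfP : forall x r, x = \sum_(c <- r) rsc (e c.1) c.2 -> Lf x = \sum_(c <- r) rsc (et c.1) c.2.
  move=> x r hr. apply: (transfer2 et bind). by rewrite -repP.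
have piL : forall x, pi (Lf x) = x.
  move=> x. rewrite /Lf pisum [RHS](repP x). apply: eq_bigr => c _.
  by rewrite piZ (etP _).1.
have LD : forall x y, Lf (x + y) = Lf x + Lf y.
  move=> x y. rewrite (LfP (x + y) (rep x ++ rep y)) ?big_cat //.
  by rewrite -!repP.
have LZ : forall x l, Lf (rsc x l) = rsc (Lf x) l.
  move=> x l. rewrite (LfP _ (map (fun c => (c.1, c.2 * l)) (rep x))).
    rewrite big_map /Lf rsc_sumr. apply: eq_bigr => c _. by rewrite rsc_comp.
  rewrite big_map {1}(repP x) rsc_sumr. apply: eq_bigr => c _. by rewrite rsc_comp.
have L0 : Lf 0 = 0.
  have := LD 0 0; rewrite addr0 => h. by apply: (addrI (Lf 0)); rewrite addr0 -h.
pose uf := fun v => v - Lf (pi v).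
have Uuf : forall v, U (uf v).
  move=> v; apply/hpi_ker. by rewrite /uf piB piL subrr.
have ufD : forall v w, uf (v + w) = uf v + uf w.
  move=> v w; rewrite /uf piD LD. by rewrite opprD addrACA.
have ufZ : forall v l, uf (rsc v l) = rsc (uf v) l.
  move=> v l; rewrite /uf piZ LZ /rsc scalerBr //.
pose Spart := fun r : K => epsilon (inhabits 0) (fun s => S s /\ T (r - s)).
have SpartP : forall r, R r -> S (Spart r) /\ T (r - Spart r).
  move=> r hr. apply: (epsilon_spec (inhabits 0) (fun s => S s /\ T (r - s))).
  have [s [t [hs [ht ->]]]] := Rdec r hr. exists s; split => //. by rewrite addrC addKr.
have Suniq : forall r s s', S s -> T (r - s) -> S s' -> T (r - s') -> Kse sigma eps (s - s').
  move=> r s s' hs hts hs' hts'. apply: SnT; first exact: gS.2.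
  rewrite -(subsub_helper r). exact: gT.2.
have Rq : forall v, R (qt (uf v)).
  move=> v; exists (uf v), 0; split => //; split; [exact: gT.1 | by rewrite addr0].
pose a2 := fun v => Spart (qt (uf v)).
have a2S : forall v, S (a2 v) by move=> v; exact: (SpartP _ (Rq v)).1.
have a2T : forall v, eqm T (qt (uf v)) (a2 v) by move=> v; exact: (SpartP _ (Rq v)).2.
exists pi, a2. split; split.
- exact: hpi_lin.
- exact: a2S.
- move=> v w. apply: (Suniq (qt (uf (v + w)))); first exact: a2S.
  + exact: a2T.
  + apply: subgrpD => //; exact: a2S.
  + rewrite ufD. apply: (eqm_trans gT (qt_addU _ _ (Uuf w))).
    apply: eqm_add => //; exact: a2T.
- move=> v l. apply: (Suniq (qt (uf (rsc v l)))); first exact: a2S.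
  + exact: a2T.
  + apply: Scirc; exact: a2S.
  + rewrite ufZ. apply: (eqm_trans gT (qsc _ _)).
    rewrite /eqm /circ -mulrBl -mulrBr. apply: Tcirc. exact: a2T.
- move=> v pv ka.
  have ufv : uf v = v by rewrite /uf pv L0 subr0.
  apply: hU_cap; first by apply/hpi_ker.
  split; first by apply: hU_rad; apply/hpi_ker.
  rewrite /singular. have := a2T v. rewrite ufv => h.
  rewrite -(subrK (a2 v) (qt v)). apply: subgrpD => //. exact: TKse.
- move=> x s hs. have [u [t [hu [ht def]]]] := SR s hs.
  have pu : pi u = 0 by apply/hpi_ker.
  exists (Lf x + u). have pv : pi (Lf x + u) = x by rewrite piD pu addr0 piL.
  split => //.
  have ufv : uf (Lf x + u) = u by rewrite /uf pv addrAC subrr add0r.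
  apply: (Suniq (qt u)); [exact: a2S | | exact: hs | ].
  + have := a2T (Lf x + u). by rewrite ufv.
  + rewrite def opprD addrA subrr add0r. exact: subgrpN.
- move=> v y [s [lam [us hx hy]]].
  pose w := \sum_(i <- s) rsc (et i) (lam i).
  have Lw : Lf (pi v) = w.
    rewrite (LfP (pi v) (map (fun i => (i, lam i)) s)) ?big_map //.
  have hK1 := K1 hadm eU hT hqt (fun i => (etP i).2) lam us.
  have hy' : y = \sum_(i <- s) \sum_(j <- s | (i < j)%O) sigma (lam i) * ft (et i) (et j) * lam j.
    rewrite hy. apply: eq_bigr => i _. apply: eq_bigr => j _.
    by rewrite -hf_def !(proj1 (etP _)).
  have vdec : v = w + uf v by rewrite /uf Lw addrC subrK.
  apply: eqm_sym => //. rewrite {1}vdec.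
  apply: (eqm_trans gT (qt_addU _ _ (Uuf v))).
  apply: eqm_add => //; try (by rewrite hy'); try exact: a2T.
Qed.
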